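(* Let $a,b\in\mathbb{R}$ with $0<a<b$, let $q\geq 1$, $s\in\left(0,\frac1q\right)$, and $\alpha,\lambda\in[0,1]$. Define $$\gamma_1(\alpha,\lambda)=(1-\alpha)\Big[\alpha\lambda-\frac{1-\alpha}{2}\Big],\qquad \gamma_2(\alpha,\lambda)=(\alpha\lambda)^2-\gamma_1(\alpha,\lambda),$$ $$c_1(\alpha,\lambda,s)=(\alpha\lambda)^{s+2}\frac{2}{(s+1)(s+2)}-\alpha\lambda\frac{(1-\alpha)^{s+1}}{s+1}+\frac{(1-\alpha)^{s+2}}{s+2},$$ $$c_2(\alpha,\lambda,s)=(1-\alpha\lambda)^{s+2}\frac{2}{(s+1)(s+2)}-\frac{(1-\alpha\lambda)(1+\alpha^{s+1})}{s+1}+\frac{1+\alpha^{s+2}}{s+2},$$ $$c_3(\alpha,\lambda,s)=\alpha\lambda\frac{(1-\alpha)^{s+1}}{s+1}-\frac{(1-\alpha)^{s+2}}{s+2},\qquad c_4(\alpha,\lambda,s)=\frac{(\alpha\lambda-1)(1-\alpha^{s+1})}{s+1}+\frac{1-\alpha^{s+2}}{s+2},$$ and set $\Delta=\left|\lambda A_\alpha(a^{s+1},b^{s+1})+(1-\lambda)A_\alpha^{s+1}(a,b)-L_{s+1}^{s+1}(a,b)\right|$. Then: (i) if $\alpha\lambda\leq 1-\alpha\leq 1-\lambda(1-\alpha)$, $$\Delta\leq (b-a)(s+1)\Big[\gamma_2^{1-\frac1q}(\alpha,\lambda)\big(c_1(\alpha,\lambda,s)b^{sq}+c_2(\alpha,\lambda,s)a^{sq}\big)^{\frac1q}+\gamma_2^{1-\frac1q}(1-\alpha,\lambda)\big(c_2(1-\alpha,\lambda,s)b^{sq}+c_1(1-\alpha,\lambda,s)a^{sq}\big)^{\frac1q}\Big];$$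 (ii) if $\alpha\lambda\leq 1-\lambda(1-\alpha)\leq 1-\alpha$, $$\Delta\leq (b-a)(s+1)\Big[\gamma_2^{1-\frac1q}(\alpha,\lambda)\big(c_1(\alpha,\lambda,s)b^{sq}+c_2(\alpha,\lambda,s)a^{sq}\big)^{\frac1q}+\gamma_1^{1-\frac1q}(1-\alpha,\lambda)\big(c_4(1-\alpha,\lambda,s)b^{sq}+c_3(1-\alpha,\lambda,s)a^{sq}\big)^{\frac1q}\Big];$$ (iii) if $1-\alpha\leq\alpha\lambda\leq 1-\lambda(1-\alpha)$, $$\Delta\leq (b-a)(s+1)\Big[\gamma_1^{1-\frac1q}(\alpha,\lambda)\big(c_3(\alpha,\lambda,s)b^{sq}+c_4(\alpha,\lambda,s)a^{sq}\big)^{\frac1q}+\gamma_2^{1-\frac1q}(1-\alpha,\lambda)\big(c_2(1-\alpha,\lambda,s)b^{sq}+c_1(1-\alpha,\lambda,s)a^{sq}\big)^{\frac1q}\Big].$$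
   Context: For real $x,y$ and $\alpha\in[0,1]$, the weighted arithmetic mean is $A_\alpha(x,y)=\alpha x+(1-\alpha)y$, and $A_\alpha^{s+1}(x,y)$ denotes $(A_\alpha(x,y))^{s+1}$. For $x,y>0$, $x\neq y$, and $p\in\mathbb{R}\setminus\{-1,0\}$, the $p$-logarithmic mean is $L_p(x,y)=\left(\frac{y^{p+1}-x^{p+1}}{(p+1)(y-x)}\right)^{1/p}$, and $L_{s+1}^{s+1}$ denotes its $(s+1)$-th power. *)

(* Defs.v *)
From HB Require Import structures.
From mathcomp Require Import all_boot all_order all_algebra.
From mathcomp Require Import all_classical all_reals.
From mathcomp Require Import exp.
Set Implicit Arguments. Unset Strict Implicit. Unset Printing Implicit Defensive.
Import Order.TTheory GRing.Theory Num.Theory.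
Local Open Scope ring_scope.

Definition Amean {R : realType} (alpha x y : R) : R := alpha * x + (1 - alpha) * y.

Definition Lmean {R : realType} (p x y : R) : R :=
  ((y `^ (p + 1) - x `^ (p + 1)) / ((p + 1) * (y - x))) `^ (p^-1).

Definition gamma1 {R : realType} (alpha lambda : R) : R :=
  (1 - alpha) * (alpha * lambda - (1 - alpha) / 2).

Definition gamma2 {R : realType} (alpha lambda : R) : R :=
  (alpha * lambda) ^+ 2 - gamma1 alpha lambda.

Definition c1 {R : realType} (alpha lambda s : R) : R :=
  (alpha * lambda) `^ (s + 2) * (2 / ((s + 1) * (s + 2)))
  - alpha * lambda * ((1 - alpha) `^ (s + 1) / (s + 1))
  + (1 - alpha) `^ (s + 2) / (s + 2).

Definition c2 {R : realType} (alpha lambda s : R) : R :=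
  (1 - alpha * lambda) `^ (s + 2) * (2 / ((s + 1) * (s + 2)))
  - (1 - alpha * lambda) * (1 + alpha `^ (s + 1)) / (s + 1)
  + (1 + alpha `^ (s + 2)) / (s + 2).

Definition c3 {R : realType} (alpha lambda s : R) : R :=
  alpha * lambda * ((1 - alpha) `^ (s + 1) / (s + 1))
  - (1 - alpha) `^ (s + 2) / (s + 2).

Definition c4 {R : realType} (alpha lambda s : R) : R :=
  (alpha * lambda - 1) * (1 - alpha `^ (s + 1)) / (s + 1)
  + (1 - alpha `^ (s + 2)) / (s + 2).

Definition Delta {R : realType} (a b alpha lambda s : R) : R :=
  `| lambda * Amean alpha (a `^ (s + 1)) (b `^ (s + 1))
     + (1 - lambda) * (Amean alpha a b) `^ (s + 1)
     - (Lmean (s + 1) a b) `^ (s + 1) |.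

(* Main.v *)
Require Import Defs.
From HB Require Import structures.
From mathcomp Require Import all_boot all_order all_algebra.
From mathcomp Require Import all_classical all_reals.
From mathcomp Require Import topology normedtype derive realfun exp.
From mathcomp Require Import ring lra.
Import Order.TTheory GRing.Theory Num.Theory.
Import numFieldNormedType.Exports.
Local Open Scope ring_scope.
Local Open Scope classical_set_scope.

Section S.
Variable R : realType.

Lemma cD {T : topologicalType} {f g : T -> R} {x} : {for x, continuous f} -> {for x, continuous g} -> {for x, continuous (fun t => f t + g t)}.
Proof. exact: continuousD. Qed.
Lemma cM {T : topologicalType} {f g : T -> R} {x} : {for x, continuous f} -> {for x, continuous g} -> {for x, continuous (fun t => f t * g t)}.
Proof. exact: continuousM. Qed.
Lemma cC {T : topologicalType} (c : R) {x} : {for x, continuous (fun _ : T => c)}.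
Proof. exact: cst_continuous. Qed.

Lemma wD {A : set R} {f g : R -> R} : {within A, continuous f} -> {within A, continuous g} ->
  {within A, continuous (fun t => f t + g t)}.
Proof. move=> cf cg x; exact: (@cD (subspace A) f g x (cf x) (cg x)). Qed.
Lemma wM {A : set R} {f g : R -> R} : {within A, continuous f} -> {within A, continuous g} ->
  {within A, continuous (fun t => f t * g t)}.
Proof. move=> cf cg x; exact: (@cM (subspace A) f g x (cf x) (cg x)). Qed.
Lemma wN {A : set R} {f : R -> R} : {within A, continuous f} ->
  {within A, continuous (fun t => - f t)}.
Proof. move=> cf x; exact: (@continuousN _ _ (subspace A) f x (cf x)). Qed.
Lemma wC (A : set R) (c : R) : {within A, continuous (fun _ : R => c)}.
Proof. move=> x; exact: (@cC (subspace A) c x). Qed.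

Lemma d_aff (c d t : R) : is_derive t 1 (fun u => c + d * u) d.
Proof. apply: is_derive_eq. by rewrite add0r mul1r; rewrite /GRing.scale/= mulr1. Qed.

Lemma d_pw (p c d t : R) : 0 < c + d * t ->
  is_derive t 1 (fun u => (c + d * u) `^ p) (p * (c + d * t) `^ (p - 1) * d).
Proof.
move=> h.
have H1 : is_derive ((fun u => c + d * u) t) 1 (fun x : R => x `^ p) (p * (c + d * t) `^ (p - 1)).
  exact: is_derive1_powR.
exact: (@is_derive1_comp R (fun x => x `^ p) (fun u => c + d*u) t _ _ H1 (d_aff c d t)).
Qed.

Lemma d_pw0 (p e t : R) : e = p + 1 -> 0 < t ->
  is_derive t 1 (fun u => u `^ e) (e * t `^ p).
Proof.
move=> -> h; apply: is_derive_eq; first exact: is_derive1_powR.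
by rewrite addrK.
Qed.

Lemma d_pw1 (p e t : R) : e = p + 1 -> t < 1 ->
  is_derive t 1 (fun u => (1 - u) `^ e) (- (e * (1 - t) `^ p)).
Proof.
move=> -> h.
have h0 : 0 < 1 - t by rewrite subr_gt0.
have H1 : is_derive ((fun u => 1 - u) t) 1 (fun x : R => x `^ (p + 1)) ((p + 1) * (1 - t) `^ (p + 1 - 1)).
  exact: is_derive1_powR.
have H2 : is_derive t 1 (fun u : R => 1 - u) (-1).
  apply: is_derive_eq. by rewrite add0r mul1r.
apply: is_derive_eq; first exact: (@is_derive1_comp R (fun x => x `^ (p + 1)) (fun u => 1 - u) t _ _ H1 H2).
by rewrite addrK mulrN1.
Qed.

Lemma cont_of_der (f : R -> R) (t df : R) : is_derive t 1 f df -> {for t, continuous f}.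
Proof. move=> H. apply/differentiable_continuous/derivable1_diffP. exact: ex_derive. Qed.

Lemma wc_pw0 (p : R) : 0 < p -> {within `[0, 1], continuous (fun u : R => u `^ p)}.
Proof.
move=> p0; apply/continuous_within_itvP => //; split.
- move=> t; rewrite in_itv /= => /andP[t0 t1].
  by apply: cont_of_der (@d_pw0 (p - 1) p t _ t0); rewrite subrK.
- rewrite powR0 ?gt_eqF //; exact: powR_cvg0.
- apply: cvg_at_left_filter.
  by apply: cont_of_der (@d_pw0 (p - 1) p 1 _ ltr01); rewrite subrK.
Qed.

Lemma wc_pw1 (p : R) : 0 < p -> {within `[0, 1], continuous (fun u : R => (1 - u) `^ p)}.
Proof.
move=> p0; apply/continuous_within_itvP => //; split.
- move=> t; rewrite in_itv /= => /andP[t0 t1].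
  by apply: cont_of_der (@d_pw1 (p - 1) p t _ t1); rewrite subrK.
- apply: cvg_at_right_filter.
  by apply: cont_of_der (@d_pw1 (p - 1) p 0 _ ltr01); rewrite subrK.
- rewrite subrr powR0 ?gt_eqF //.
  apply/cvgrPdist_lt => e e0.
  have d0 : 0 < e `^ (p^-1) by rewrite powR_gt0.
  near=> t.
  have tl : t < 1 by near: t; exact: nbhs_left_lt.
  have td : 1 - t < e `^ (p^-1) by near: t; exact: nbhs_left_ltBl.
  rewrite sub0r normrN ger0_norm ?powR_ge0 //.
  have := @gt0_ltr_powR R p p0 (1 - t) (e `^ (p^-1)).
  rewrite -powRrM mulVf ?gt_eqF // powRr1 ?ltW //; apply.
  - by rewrite nnegrE subr_ge0 ltW.
  - by rewrite nnegrE powR_ge0.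
  - exact: td.
Unshelve. all: end_near. Qed.


Lemma cmp_lem (F H dF dH : R -> R) (l r : R) : l <= r ->
  (forall x, x \in `]l, r[%R -> is_derive x 1 F (dF x)) ->
  (forall x, x \in `]l, r[%R -> is_derive x 1 H (dH x)) ->
  (forall x, x \in `]l, r[%R -> `|dF x| <= dH x) ->
  {within `[l, r], continuous F} -> {within `[l, r], continuous H} ->
  `|F r - F l| <= H r - H l.
Proof.
move=> lr hF hH hle cF cH.
case: (eqVneq l r) => [->|lr']; first by rewrite !subrr normr0.
have ltlr : l < r by rewrite lt_neqAle lr' lr.
have [c1 c1in e1] := @MVT R (fun t => H t - F t) (fun t => dH t - dF t) l r ltlr
  (fun x xin => is_deriveB (hH x xin) (hF x xin))
  (wD cH (wN cF)).
have [c2 c2in e2] := @MVT R (fun t => H t + F t) (fun t => dH t + dF t) l r ltlr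
  (fun x xin => is_deriveD (hH x xin) (hF x xin))
  (wD cH cF).
have k1 := hle c1 c1in; have k2 := hle c2 c2in.
have p1 : 0 <= (dH c1 - dF c1) * (r - l).
  apply: mulr_ge0; last by rewrite subr_ge0.
  rewrite subr_ge0; exact: le_trans (ler_norm _) k1.
have p2 : 0 <= (dH c2 + dF c2) * (r - l).
  apply: mulr_ge0; last by rewrite subr_ge0.
  rewrite -lerBlDr sub0r; apply: le_trans k2.
  by rewrite -normrN ler_norm.
rewrite -e1 in p1; rewrite -e2 in p2.
apply/ler_normlP; split; lra.
Qed.

Definition xx (a b t : R) := a + (b - a) * t.

Definition Pf (a b s z t : R) :=
  (t - z) * (xx a b t) `^ (s + 1) - (xx a b t) `^ (s + 2) / ((s + 2) * (b - a)).

Lemma Pf_der (a b s z t : R) : a < b -> 0 < s -> 0 < xx a b t ->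
  is_derive t 1 (Pf a b s z) ((t - z) * ((b - a) * ((s + 1) * (xx a b t) `^ s))).
Proof.
move=> ab s0 xt.
have H1 := @d_pw (s + 1) a (b - a) t xt.
have H2 := @d_pw (s + 2) a (b - a) t xt.
rewrite /Pf /xx.
apply: is_derive_eq.
rewrite /GRing.scale /=.
rewrite (_ : s + 1 - 1 = s); last by ring.
rewrite (_ : s + 2 - 1 = s + 1); last by ring.
rewrite /xx in xt.
have ba : b - a != 0 by rewrite subr_eq0 gt_eqF.
have s2 : s + 2 != 0 by rewrite gt_eqF // addr_gt0.
field; by rewrite ba s2.
Qed.


Definition L5 (s z k1 k2 k3 k4 k5 t : R) :=
  k1 * t `^ (s + 2) + k2 * t `^ (s + 1) + k3 * (1 - t) `^ (s + 2)
  + k4 * (1 - t) `^ (s + 1) + k5 * (t - z) ^+ 2.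

Definition dL5 (s z k1 k2 k3 k4 k5 t : R) :=
  k1 * ((s + 2) * t `^ (s + 1)) + k2 * ((s + 1) * t `^ s)
  - k3 * ((s + 2) * (1 - t) `^ (s + 1)) - k4 * ((s + 1) * (1 - t) `^ s)
  + k5 * (2 * (t - z)).

Lemma L5_der (s z k1 k2 k3 k4 k5 t : R) : 0 < t < 1 ->
  is_derive t 1 (L5 s z k1 k2 k3 k4 k5) (dL5 s z k1 k2 k3 k4 k5 t).
Proof.
case/andP=> t0 t1.
have H1 := @d_pw0 (s + 1) (s + 2) t ltac:(ring) t0.
have H2 := @d_pw0 s (s + 1) t erefl t0.
have H3 := @d_pw1 (s + 1) (s + 2) t ltac:(ring) t1.
have H4 := @d_pw1 s (s + 1) t erefl t1.
rewrite /L5; apply: is_derive_eq.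
rewrite /dL5 /GRing.scale /=.
ring.
Qed.

Lemma L5_cont (s z k1 k2 k3 k4 k5 l r : R) : 0 < s -> 0 <= l -> r <= 1 ->
  {within `[l, r], continuous (L5 s z k1 k2 k3 k4 k5)}.
Proof.
move=> s0 l0 r1.
have sub : `[l, r] `<=` `[0, 1].
  apply: subset_itv; rewrite bnd_simp //.
have s1 : 0 < s + 1 by rewrite addr_gt0.
have s2 : 0 < s + 2 by rewrite addr_gt0.
have a1 := continuous_subspaceW sub (@wc_pw0 (s + 2) s2).
have a2 := continuous_subspaceW sub (@wc_pw0 (s + 1) s1).
have a3 := continuous_subspaceW sub (@wc_pw1 (s + 2) s2).
have a4 := continuous_subspaceW sub (@wc_pw1 (s + 1) s1).
have a5 : {within `[l, r], continuous (fun t : R => (t - z) ^+ 2)}.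
  apply: continuous_subspaceT => t.
  apply: (@cont_of_der _ t (2 * (t - z))).
  apply: is_derive_eq. rewrite /GRing.scale /=. ring.
rewrite /L5.
apply: wD; last exact: wM (wC _ _) a5.
apply: wD; last exact: wM (wC _ _) a4.
apply: wD; last exact: wM (wC _ _) a3.
apply: wD; last exact: wM (wC _ _) a2.
exact: wM (wC _ _) a1.
Qed.


Lemma subadd (u v r : R) : 0 < u -> 0 < v -> 0 < r <= 1 ->
  (u + v) `^ r <= u `^ r + v `^ r.
Proof.
move=> u0 v0 /andP[r0 r1].
set w := u + v.
have w0 : 0 < w by rewrite addr_gt0.
have eu : u = (u / w) * w by rewrite divfK ?gt_eqF.
have ev : v = (v / w) * w by rewrite divfK ?gt_eqF.
have hu : u / w <= (u / w) `^ r.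
  apply: ger1_powR => //; rewrite divr_gt0 //= ler_pdivrMr // mul1r /w lerDl ltW //.
have hv : v / w <= (v / w) `^ r.
  apply: ger1_powR => //; rewrite divr_gt0 //= ler_pdivrMr // mul1r /w lerDr ltW //.
have eu' : u `^ r = (u / w) `^ r * w `^ r by rewrite -powRM ?divfK ?gt_eqF ?divr_ge0 ?ltW.
have ev' : v `^ r = (v / w) `^ r * w `^ r by rewrite -powRM ?divfK ?gt_eqF ?divr_ge0 ?ltW.
have ew : u / w + v / w = 1 by rewrite -mulrDl -/w divff ?gt_eqF.
have wr0 : 0 <= w `^ r by rewrite powR_ge0.
rewrite eu' ev' -mulrDl.
apply: (@le_trans _ _ ((u / w + v / w) * w `^ r)); first by rewrite ew mul1r.
apply: ler_wpM2r => //; exact: lerD.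
Qed.

Lemma young (y q : R) : 0 < y -> 1 <= q -> y `^ (q^-1) <= y / q + (1 - q^-1).
Proof.
move=> y0 q1.
case: (eqVneq q 1) => [->|qn1].
  by rewrite invr1 (powRr1 (ltW y0)) subrr addr0 mulr1.
have q1' : 1 < q by rewrite lt_neqAle eq_sym qn1 q1.
have q0 : 0 < q by apply: lt_trans q1'.
have iq : q^-1 < 1 by rewrite invf_lt1.
have p0 : 0 < (1 - q^-1)^-1 by rewrite invr_gt0 subr_gt0.
have := @conjugate_powR R (y `^ (q^-1)) 1 q ((1 - q^-1)^-1) (powR_ge0 _ _) ler01 q0 p0.
rewrite invrK addrC subrK => /(_ erefl).
rewrite mulr1 -powRrM mulVf ?gt_eqF // (powRr1 (ltW y0)).
have -> : (1:R) `^ ((1 - q^-1)^-1) = 1 by rewrite /powR oner_eq0 ln1 mulr0 expR0.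
by rewrite mul1r.
Qed.

Lemma ptw (a b q s t th : R) : 0 < a -> a < b -> 1 <= q -> 0 < s -> s * q <= 1 ->
  0 < t < 1 -> 0 < th ->
  xx a b t `^ s <= th `^ (q^-1) *
    ((b `^ (s * q) * t `^ s + a `^ (s * q) * (1 - t) `^ s) / (q * th) + (1 - q^-1)).
Proof.
move=> a0 ab q1 s0 sq1 /andP[t0 t1] th0.
have q0 : 0 < q by apply: lt_le_trans q1.
have b0 : 0 < b by apply: lt_trans ab.
have sq0 : 0 < s * q by rewrite mulr_gt0.
have ex : xx a b t = t * b + (1 - t) * a by rewrite /xx; ring.
have x0 : 0 < xx a b t by rewrite ex addr_gt0 // mulr_gt0 // subr_gt0.
set h := b `^ (s * q) * t `^ s + a `^ (s * q) * (1 - t) `^ s.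
have h1 : xx a b t `^ (s * q) <= h.
  have tb0 : 0 < t * b by rewrite mulr_gt0.
  have ta0 : 0 < (1 - t) * a by rewrite mulr_gt0 // subr_gt0.
  have sq01 : 0 < s * q <= 1 by rewrite sq0.
  rewrite ex; apply: (le_trans (@subadd (t * b) ((1 - t) * a) (s * q) tb0 ta0 sq01)).
  have t0' : 0 <= t by apply: ltW.
  have b0' : 0 <= b by apply: ltW.
  have a0' : 0 <= a by apply: ltW.
  have t1' : 0 <= 1 - t by rewrite subr_ge0 ltW.
  rewrite !powRM // /h [b `^ _ * _]mulrC [a `^ _ * _]mulrC.
  have sle : s <= s * q by rewrite ler_peMr // ltW.
  apply: lerD; apply: ler_wpM2r; rewrite ?powR_ge0 //; apply: ger_powR => //.
  - by rewrite t0 ltW.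
  - by rewrite subr_gt0 t1 /= lerBlDr lerDl ltW.
have h0 : 0 < h.
  by rewrite /h addr_gt0 // mulr_gt0 // powR_gt0 // subr_gt0.
have e1 : xx a b t `^ s = (xx a b t `^ (s * q)) `^ (q^-1).
  by rewrite -powRrM mulfK ?gt_eqF.
rewrite e1; apply: le_trans (_ : h `^ (q^-1) <= _).
  apply: ge0_ler_powR => //; rewrite ?invr_ge0 ?nnegrE ?powR_ge0 //; apply: ltW => //.
have eh : h = th * (h / th) by rewrite mulrC divfK ?gt_eqF.
have th0' : 0 <= th by apply: ltW.
have hth : 0 <= h / th by rewrite divr_ge0 // ltW.
rewrite [in X in X `^ _ <= _]eh powRM //.
apply: ler_wpM2l; first exact: powR_ge0.
have hth0 : 0 < h / th by rewrite divr_gt0.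
apply: (le_trans (@young (h / th) q hth0 q1)).
rewrite invfM le_eqVlt; apply/orP; left; apply/eqP; field. by rewrite !gt_eqF.
Qed.


Definition Psi (s A B z t : R) :=
  B * (t `^ (s + 2) / (s + 2) - z * t `^ (s + 1) / (s + 1))
  + A * ((1 - t) `^ (s + 2) / (s + 2) - (1 - z) * (1 - t) `^ (s + 1) / (s + 1)).

Definition Gam (z t : R) := (t - z) ^+ 2 / 2.

Definition Hth (K th q s A B z t : R) :=
  K * th `^ (q^-1) * (Psi s A B z t / (q * th) + (1 - q^-1) * Gam z t).

Definition kk (K th q s A B z : R) :=
  (K * th `^ (q^-1) * B / ((s + 2) * (q * th)),
   - (K * th `^ (q^-1) * B * z / ((s + 1) * (q * th))),
   K * th `^ (q^-1) * A / ((s + 2) * (q * th)),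
   - (K * th `^ (q^-1) * A * (1 - z) / ((s + 1) * (q * th))),
   K * th `^ (q^-1) * (1 - q^-1) / 2).

Lemma Hth_L5 (K th q s A B z e t : R) : 0 < s -> 0 < q -> 0 < th ->
  let k := kk K th q s A B z in
  e * Hth K th q s A B z t = L5 s z (e * k.1.1.1.1) (e * k.1.1.1.2) (e * k.1.1.2) (e * k.1.2) (e * k.2) t.
Proof.
move=> s0 q0 th0 /=.
rewrite /Hth /L5 /Psi /Gam.
move: (t `^ (s + 2)) (t `^ (s + 1)) ((1 - t) `^ (s + 2)) ((1 - t) `^ (s + 1)) (th `^ (q^-1)) => P1 P2 P3 P4 T.
have s1 : s + 1 != 0 by rewrite gt_eqF // addr_gt0.
have s2 : s + 2 != 0 by rewrite gt_eqF // addr_gt0.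
field. by rewrite s1 s2 !gt_eqF.
Qed.

Lemma pw_succ {t s : R} : 0 < t -> 0 < s -> t `^ (s + 1) = t * t `^ s.
Proof.
move=> t0 s0; rewrite powRD; last by rewrite (gt_eqF t0) implybT.
by rewrite (powRr1 (ltW t0)) mulrC.
Qed.

Lemma dL5_eq (K th q s A B z e t : R) : 0 < s -> 0 < q -> 0 < th -> 0 < t < 1 ->
  let k := kk K th q s A B z in
  dL5 s z (e * k.1.1.1.1) (e * k.1.1.1.2) (e * k.1.1.2) (e * k.1.2) (e * k.2) t =
  e * (t - z) * (K * th `^ (q^-1) *
     ((B * t `^ s + A * (1 - t) `^ s) / (q * th) + (1 - q^-1))).
Proof.
move=> s0 q0 th0 /andP[t0 t1] /=.
rewrite /dL5 (pw_succ t0 s0) (@pw_succ (1 - t) s) ?subr_gt0 //.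
move: (t `^ s) ((1 - t) `^ s) (th `^ (q^-1)) => P1 P2 T.
have s1 : s + 1 != 0 by rewrite gt_eqF // addr_gt0.
have s2 : s + 2 != 0 by rewrite gt_eqF // addr_gt0.
field. by rewrite s1 s2 !gt_eqF.
Qed.


Lemma sub_lem (a b q s th z l r e : R) : 0 < a -> a < b -> 1 <= q -> 0 < s -> s * q <= 1 ->
  0 < th -> 0 <= l -> l <= r -> r <= 1 -> (e = 1 \/ e = -1) ->
  (forall t, l < t < r -> 0 <= e * (t - z)) ->
  `|Pf a b s z r - Pf a b s z l| <=
    e * (Hth ((b - a) * (s + 1)) th q s (a `^ (s * q)) (b `^ (s * q)) z r
         - Hth ((b - a) * (s + 1)) th q s (a `^ (s * q)) (b `^ (s * q)) z l).
Proof.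
move=> a0 ab q1 s0 sq1 th0 l0 lr r1 eE esg.
have q0 : 0 < q by apply: lt_le_trans q1.
have ba0 : 0 < b - a by rewrite subr_gt0.
have xpos : forall x, 0 <= x -> 0 < xx a b x.
  by move=> x x0; rewrite /xx; apply: lt_le_trans a0 _; rewrite lerDl mulr_ge0 // ltW.
rewrite mulrBr (@Hth_L5 ((b - a) * (s + 1)) th q s (a `^ (s * q)) (b `^ (s * q)) z e r s0 q0 th0).
rewrite (@Hth_L5 ((b - a) * (s + 1)) th q s (a `^ (s * q)) (b `^ (s * q)) z e l s0 q0 th0).
set k := kk _ _ _ _ _ _ _.
apply: (@cmp_lem (Pf a b s z) _ (fun t => (t - z) * ((b - a) * ((s + 1) * xx a b t `^ s)))
   (dL5 s z (e * k.1.1.1.1) (e * k.1.1.1.2) (e * k.1.1.2) (e * k.1.2) (e * k.2)) l r lr).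
- move=> x; rewrite in_itv /= => /andP[lx xr].
  apply: Pf_der => //; apply: xpos; apply: le_trans l0 (ltW lx).
- move=> x; rewrite in_itv /= => /andP[lx xr].
  apply: L5_der; rewrite (le_lt_trans l0 lx) /=; exact: lt_le_trans xr r1.
- move=> x; rewrite in_itv /= => /andP[lx xr].
  have x0 : 0 < x by apply: le_lt_trans l0 lx.
  have x1 : x < 1 by apply: lt_le_trans xr r1.
  rewrite dL5_eq //; last by rewrite x0 x1.
  have ez := esg x ltac:(by rewrite lx xr).
  have nz : `|x - z| = e * (x - z).
    case: eE => ee; rewrite ee in ez *; rewrite ?mul1r ?mulN1r in ez *.
    - by rewrite ger0_norm.
    - by rewrite ler0_norm // -oppr_ge0.
  rewrite normrM nz; apply: ler_wpM2l => //.
  have hx := powR_ge0 (xx a b x) s.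
  rewrite ger0_norm; last first.
    apply: mulr_ge0; first exact: ltW.
    apply: mulr_ge0 => //; exact: addr_ge0 (ltW s0) ler01.
  rewrite mulrA -[in X in _ <= X]mulrA; apply: ler_wpM2l.
    apply: mulr_ge0; [exact: ltW | exact: addr_ge0 (ltW s0) ler01].
  apply: ptw => //; by rewrite x0 x1.
- apply: continuous_in_subspaceT => x.
  rewrite inE /= in_itv /= => /andP[lx xr].
  apply: cont_of_der; apply: Pf_der => //; apply: xpos; exact: le_trans l0 lx.
- exact: L5_cont.
Qed.


Lemma pos_lem (s A B z l r e : R) : 0 < s -> s <= 1 -> 0 <= A -> A <= B ->
  0 <= l -> l <= r -> r <= 1 -> (e = 1 \/ e = -1) ->
  (forall t, l < t < r -> 0 <= e * (t - z)) ->
  0 <= e * ((Psi s A B z r - A * Gam z r) - (Psi s A B z l - A * Gam z l)).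
Proof.
move=> s0 s1' A0 AB l0 lr r1 eE esg.
have s1 : s + 1 != 0 by rewrite gt_eqF // addr_gt0.
have s2 : s + 2 != 0 by rewrite gt_eqF // addr_gt0.
have eq : forall t, e * (Psi s A B z t - A * Gam z t) =
  L5 s z (e * (B / (s + 2))) (e * (- (B * z / (s + 1)))) (e * (A / (s + 2)))
         (e * (- (A * (1 - z) / (s + 1)))) (e * (- (A / 2))) t.
  move=> t; rewrite /L5 /Psi /Gam.
  move: (t `^ (s + 2)) (t `^ (s + 1)) ((1 - t) `^ (s + 2)) ((1 - t) `^ (s + 1)) => P1 P2 P3 P4.
  by field; rewrite s1 s2.
rewrite mulrBr !eq.
have := @cmp_lem (fun _ => 0) (L5 s z (e * (B / (s + 2))) (e * (- (B * z / (s + 1)))) (e * (A / (s + 2)))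
         (e * (- (A * (1 - z) / (s + 1)))) (e * (- (A / 2)))) (fun _ => 0)
   (dL5 s z (e * (B / (s + 2))) (e * (- (B * z / (s + 1)))) (e * (A / (s + 2)))
         (e * (- (A * (1 - z) / (s + 1)))) (e * (- (A / 2)))) l r lr.
rewrite subrr normr0; apply.
- move=> x; rewrite in_itv /= => /andP[lx xr]; apply: L5_der.
  rewrite (le_lt_trans l0 lx) /=; exact: lt_le_trans xr r1.
- move=> x; rewrite in_itv /= => /andP[lx xr].
  have x0 : 0 < x by apply: le_lt_trans l0 lx.
  have x1 : x < 1 by apply: lt_le_trans xr r1.
  have ez := esg x ltac:(by rewrite lx xr).
  have -> : dL5 s z (e * (B / (s + 2))) (e * (- (B * z / (s + 1)))) (e * (A / (s + 2)))
         (e * (- (A * (1 - z) / (s + 1)))) (e * (- (A / 2))) x =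
         e * (x - z) * (B * x `^ s + A * (1 - x) `^ s - A).
    rewrite /dL5 (pw_succ x0 s0) (@pw_succ (1 - x) s) ?subr_gt0 //.
    move: (x `^ s) ((1 - x) `^ s) => P1 P2.
    by field; rewrite s1 s2.
  apply: mulr_ge0 => //.
  have h1 : x <= x `^ s by apply: ger1_powR => //; rewrite x0 ltW.
  have h2 : 1 - x <= (1 - x) `^ s.
    by apply: ger1_powR => //; rewrite subr_gt0 x1 /= lerBlDr lerDl ltW.
  have h3 : 0 <= (B - A) * x `^ s by rewrite mulr_ge0 ?powR_ge0 // subr_ge0.
  have h4 : 0 <= A * (x `^ s - x) by rewrite mulr_ge0 // subr_ge0.
  have h5 : 0 <= A * ((1 - x) `^ s - (1 - x)) by rewrite mulr_ge0 // subr_ge0.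
  move: h3 h4 h5; move: (x `^ s) ((1 - x) `^ s) => X Y.
  rewrite !mulrBr !mulrBl; lra.
- exact: wC.
- exact: L5_cont.
Qed.


Lemma opt (X K C G A q : R) : 0 <= K -> 0 < G -> 0 < A -> A * G <= C -> 1 <= q ->
  (forall th, 0 < th -> X <= K * th `^ (q^-1) * (C / (q * th) + (1 - q^-1) * G)) ->
  X <= K * G `^ (1 - q^-1) * C `^ (q^-1).
Proof.
move=> K0 G0 A0 AGC q1 H.
have q0 : 0 < q by apply: lt_le_trans q1.
have C0 : 0 < C by apply: lt_le_trans AGC; rewrite mulr_gt0.
have th0 : 0 < C / G by rewrite divr_gt0.
apply: le_trans (H _ th0) _.
have e1 : (C / G) `^ (q^-1) * G `^ (q^-1) = C `^ (q^-1).
  have hCG : 0 <= C / G by rewrite divr_ge0 // ltW.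
  have G0' : 0 <= G by apply: ltW.
  by rewrite -(powRM _ hCG G0') divfK // gt_eqF.
have e2 : G `^ (1 - q^-1) * G `^ (q^-1) = G.
  rewrite -powRD; last by rewrite (gt_eqF G0) implybT.
  by rewrite subrK (powRr1 (ltW G0)).
have Gq : 0 < G `^ (q^-1) by rewrite powR_gt0.
have e2' : G `^ (1 - q^-1) = G / G `^ (q^-1).
  by apply: (mulIf (lt0r_neq0 Gq)); rewrite e2 divfK // gt_eqF.
rewrite -e1 e2'.
move: (G `^ (q^-1)) Gq ((C / G) `^ (q^-1)) => Q Q0 V.
rewrite le_eqVlt; apply/orP; left; apply/eqP.
field; by rewrite !gt_eqF.
Qed.


Lemma piece (a b q s z l m r e1 e2 : R) :
  0 < a -> a < b -> 1 <= q -> 0 < s -> s * q <= 1 ->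
  0 <= l -> l <= m -> m <= r -> r <= 1 ->
  (e1 = 1 \/ e1 = -1) -> (e2 = 1 \/ e2 = -1) ->
  (forall t, l < t < m -> 0 <= e1 * (t - z)) ->
  (forall t, m < t < r -> 0 <= e2 * (t - z)) ->
  (l < r -> 0 < e2 * (Gam z r - Gam z m) + e1 * (Gam z m - Gam z l)) ->
  `|Pf a b s z r - Pf a b s z l| <= (b - a) * (s + 1) *
     (e2 * (Gam z r - Gam z m) + e1 * (Gam z m - Gam z l)) `^ (1 - q^-1) *
     (e2 * (Psi s (a `^ (s * q)) (b `^ (s * q)) z r - Psi s (a `^ (s * q)) (b `^ (s * q)) z m)
      + e1 * (Psi s (a `^ (s * q)) (b `^ (s * q)) z m - Psi s (a `^ (s * q)) (b `^ (s * q)) z l)) `^ (q^-1).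
Proof.
move=> a0 ab q1 s0 sq1 l0 lm mr r1 e1E e2E e1s e2s HG.
have q0 : 0 < q by apply: lt_le_trans q1.
have K0 : 0 <= (b - a) * (s + 1).
  by apply: mulr_ge0; [rewrite subr_ge0 ltW | exact: addr_ge0 (ltW s0) ler01].
case: (eqVneq l r) => [lr|lr].
  have ml : m = l by apply/le_anti; rewrite lm andbT lr mr.
  rewrite ml -lr subrr normr0.
  by apply: mulr_ge0; [apply: mulr_ge0 => // | ]; exact: powR_ge0.
have ltlr : l < r by rewrite lt_neqAle lr /= (le_trans lm mr).
have G0 := HG ltlr.
have s1 : s <= 1.
  apply: le_trans sq1; rewrite ler_peMr // ltW //.
have A0 : 0 < a `^ (s * q) by rewrite powR_gt0.
have AB : a `^ (s * q) <= b `^ (s * q).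
  apply: ge0_ler_powR; rewrite ?nnegrE ?mulr_ge0 //; try exact: ltW.
  exact: le_trans (ltW a0) (ltW ab).
apply: (@opt _ _ _ _ (a `^ (s * q)) q K0 G0 A0 _ q1).
  have p1 := @pos_lem s (a `^ (s * q)) (b `^ (s * q)) z m r e2 s0 s1 (ltW A0) AB (le_trans l0 lm) mr r1 e2E e2s.
  have p2 := @pos_lem s (a `^ (s * q)) (b `^ (s * q)) z l m e1 s0 s1 (ltW A0) AB l0 lm (le_trans mr r1) e1E e1s.
  rewrite -subr_ge0.
  move: p1 p2.
  move: (Psi s (a `^ (s * q)) (b `^ (s * q)) z r) (Psi s (a `^ (s * q)) (b `^ (s * q)) z m)
    (Psi s (a `^ (s * q)) (b `^ (s * q)) z l) => P1 P2 P3.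
  move: (Gam z r) (Gam z m) (Gam z l) (a `^ (s * q)) => G1 G2 G3 A.
  move=> p1 p2.
  have -> : e2 * (P1 - P2) + e1 * (P2 - P3) - A * (e2 * (G1 - G2) + e1 * (G2 - G3)) =
     e2 * (P1 - A * G1 - (P2 - A * G2)) + e1 * (P2 - A * G2 - (P3 - A * G3)) by ring.
  exact: addr_ge0.
move=> th th0.
have h1 := @sub_lem a b q s th z m r e2 a0 ab q1 s0 sq1 th0 (le_trans l0 lm) mr r1 e2E e2s.
have h2 := @sub_lem a b q s th z l m e1 a0 ab q1 s0 sq1 th0 l0 lm (le_trans mr r1) e1E e1s.
have -> : Pf a b s z r - Pf a b s z l = (Pf a b s z r - Pf a b s z m) + (Pf a b s z m - Pf a b s z l) by ring.
apply: le_trans (ler_normD _ _) _.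
apply: le_trans (lerD h1 h2) _.
rewrite /Hth le_eqVlt; apply/orP; left; apply/eqP.
ring.
Qed.


Lemma pw0 (p : R) : 0 < p -> 0 `^ p = 0.
Proof. by move=> p0; rewrite powR0 // gt_eqF. Qed.
Lemma pw1 (p : R) : 1 `^ p = 1.
Proof. by rewrite /powR oner_eq0 ln1 mulr0 expR0. Qed.
Lemma pw2 (t s : R) : 0 <= t -> 0 < s -> t `^ (s + 2) = t * t `^ (s + 1).
Proof.
move=> t0 s0; case: (eqVneq t 0) => [->|tn0].
  by rewrite !pw0 ?mul0r // addr_gt0.
have tp : 0 < t by rewrite lt_neqAle eq_sym tn0 t0.
rewrite (_ : s + 2 = (s + 1) + 1); last by ring.
by rewrite (@pw_succ t (s + 1)) // addr_gt0.
Qed.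

Lemma P1int (a b q s al la : R) : 0 < a -> a < b -> 1 <= q -> 0 < s -> s * q <= 1 ->
  0 <= al <= 1 -> 0 <= la <= 1 -> al * la <= 1 - al ->
  `|Pf a b s (al * la) (1 - al) - Pf a b s (al * la) 0| <= (b - a) * (s + 1) *
    gamma2 al la `^ (1 - q^-1) *
    (c1 al la s * b `^ (s * q) + c2 al la s * a `^ (s * q)) `^ (q^-1).
Proof.
move=> a0 ab q1 s0 sq1 /andP[al0 al1] /andP[la0 la1] h.
have z0 : 0 <= al * la by rewrite mulr_ge0.
have z1 : al * la <= 1 by rewrite mulr_ile1.
apply: le_trans (@piece a b q s (al * la) 0 (al * la) (1 - al) (-1) 1 a0 ab q1 s0 sq1 (lexx 0) z0 h _ _ _ _ _ _) _.
- by rewrite lerBlDr lerDl.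
- by right.
- by left.
- move=> t /andP[_ tz]; rewrite mulN1r oppr_ge0 subr_le0 ltW //.
- move=> t /andP[zt _]; rewrite mul1r subr_ge0 ltW //.
- move=> lt01; rewrite /Gam.
  have -> : 1 * ((1 - al - al * la) ^+ 2 / 2 - (al * la - al * la) ^+ 2 / 2) +
    -1 * ((al * la - al * la) ^+ 2 / 2 - (0 - al * la) ^+ 2 / 2) =
    ((1 - al - al * la) ^+ 2 + (al * la) ^+ 2) / 2 by ring.
  apply: divr_gt0 => //.
  case: (eqVneq (al * la) 0) => [->|zn0].
    by rewrite subr0 expr0n addr0 exprn_gt0.
  have zp : 0 < al * la by rewrite lt_neqAle eq_sym zn0 z0.
  by apply: ltr_wpDl; [exact: sqr_ge0 | exact: exprn_gt0].
have s1 : 0 < s + 1 by rewrite addr_gt0.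
have s2 : 0 < s + 2 by rewrite addr_gt0.
have eG : 1 * (Gam (al * la) (1 - al) - Gam (al * la) (al * la)) +
   -1 * (Gam (al * la) (al * la) - Gam (al * la) 0) = gamma2 al la.
  by rewrite /Gam /gamma2 /gamma1; field.
rewrite eG.
have eC : 1 * (Psi s (a `^ (s * q)) (b `^ (s * q)) (al * la) (1 - al) -
      Psi s (a `^ (s * q)) (b `^ (s * q)) (al * la) (al * la)) +
   -1 * (Psi s (a `^ (s * q)) (b `^ (s * q)) (al * la) (al * la) -
      Psi s (a `^ (s * q)) (b `^ (s * q)) (al * la) 0) =
   c1 al la s * b `^ (s * q) + c2 al la s * a `^ (s * q).
  rewrite /Psi /c1 /c2 subr0 !(@pw0 (s + 1) s1) !(@pw0 (s + 2) s2) !pw1.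
  rewrite (_ : 1 - (1 - al) = al); last by ring.
  rewrite (@pw2 (al * la)) // (@pw2 (1 - al * la)) ?subr_ge0 //.
  move: (b `^ (s * q)) (a `^ (s * q)) ((al * la) `^ (s + 1)) ((1 - al * la) `^ (s + 1)) => B A Z1 Z2.
  move: ((1 - al) `^ (s + 2)) ((1 - al) `^ (s + 1)) (al `^ (s + 2)) (al `^ (s + 1)) => R2 R1 L2 L1.
  field; by rewrite !gt_eqF.
by rewrite eC.
Qed.


Lemma P1neg (a b q s al la : R) : 0 < a -> a < b -> 1 <= q -> 0 < s -> s * q <= 1 ->
  0 <= al <= 1 -> 0 <= la <= 1 -> 1 - al <= al * la ->
  `|Pf a b s (al * la) (1 - al) - Pf a b s (al * la) 0| <= (b - a) * (s + 1) *
    gamma1 al la `^ (1 - q^-1) *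
    (c3 al la s * b `^ (s * q) + c4 al la s * a `^ (s * q)) `^ (q^-1).
Proof.
move=> a0 ab q1 s0 sq1 /andP[al0 al1] /andP[la0 la1] h.
have r0 : 0 <= 1 - al by rewrite subr_ge0.
apply: le_trans (@piece a b q s (al * la) 0 (1 - al) (1 - al) (-1) (-1) a0 ab q1 s0 sq1 (lexx 0) r0 (lexx _) _ _ _ _ _ _) _.
- by rewrite lerBlDr lerDl.
- by right.
- by right.
- move=> t /andP[_ tz]; rewrite mulN1r oppr_ge0 subr_le0; apply: ltW; exact: lt_le_trans tz h.
- by move=> t /andP[zt tr]; move: (lt_trans zt tr); rewrite ltxx.
- move=> lt01; rewrite /Gam.
  have -> : -1 * ((1 - al - al * la) ^+ 2 / 2 - (1 - al - al * la) ^+ 2 / 2) +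
    -1 * ((1 - al - al * la) ^+ 2 / 2 - (0 - al * la) ^+ 2 / 2) =
    (1 - al) * (2 * (al * la) - (1 - al)) / 2 by ring.
  apply: divr_gt0 => //; apply: mulr_gt0 => //.
  lra.
have s1 : 0 < s + 1 by rewrite addr_gt0.
have s2 : 0 < s + 2 by rewrite addr_gt0.
have eG : -1 * (Gam (al * la) (1 - al) - Gam (al * la) (1 - al)) +
   -1 * (Gam (al * la) (1 - al) - Gam (al * la) 0) = gamma1 al la.
  by rewrite /Gam /gamma1; field.
rewrite eG.
have eC : -1 * (Psi s (a `^ (s * q)) (b `^ (s * q)) (al * la) (1 - al) -
      Psi s (a `^ (s * q)) (b `^ (s * q)) (al * la) (1 - al)) +
   -1 * (Psi s (a `^ (s * q)) (b `^ (s * q)) (al * la) (1 - al) -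
      Psi s (a `^ (s * q)) (b `^ (s * q)) (al * la) 0) =
   c3 al la s * b `^ (s * q) + c4 al la s * a `^ (s * q).
  rewrite /Psi /c3 /c4 subr0 !(@pw0 (s + 1) s1) !(@pw0 (s + 2) s2) !pw1.
  rewrite (_ : 1 - (1 - al) = al); last by ring.
  move: (b `^ (s * q)) (a `^ (s * q)) => B A.
  move: ((1 - al) `^ (s + 2)) ((1 - al) `^ (s + 1)) (al `^ (s + 2)) (al `^ (s + 1)) => R2 R1 L2 L1.
  field; by rewrite !gt_eqF.
by rewrite eC.
Qed.

Lemma P2int (a b q s al la : R) : 0 < a -> a < b -> 1 <= q -> 0 < s -> s * q <= 1 ->
  0 <= al <= 1 -> 0 <= la <= 1 -> 1 - al <= 1 - (1 - al) * la ->
  `|Pf a b s (1 - (1 - al) * la) 1 - Pf a b s (1 - (1 - al) * la) (1 - al)| <= (b - a) * (s + 1) *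
    gamma2 (1 - al) la `^ (1 - q^-1) *
    (c2 (1 - al) la s * b `^ (s * q) + c1 (1 - al) la s * a `^ (s * q)) `^ (q^-1).
Proof.
move=> a0 ab q1 s0 sq1 /andP[al0 al1] /andP[la0 la1] h.
have r0 : 0 <= 1 - al by rewrite subr_ge0.
have w0 : 0 <= (1 - al) * la by rewrite mulr_ge0.
have w1 : (1 - al) * la <= 1 by rewrite mulr_ile1 // lerBlDr lerDl.
have z1 : 1 - (1 - al) * la <= 1 by rewrite lerBlDr lerDl.
apply: le_trans (@piece a b q s (1 - (1 - al) * la) (1 - al) (1 - (1 - al) * la) 1 (-1) 1 a0 ab q1 s0 sq1 r0 h z1 (lexx 1) _ _ _ _ _) _.
- by right.
- by left.
- move=> t /andP[_ tz]; rewrite mulN1r oppr_ge0 subr_le0 ltW //.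
- move=> t /andP[zt _]; rewrite mul1r subr_ge0 ltW //.
- move=> lt01; rewrite /Gam.
  have -> : 1 * ((1 - (1 - (1 - al) * la)) ^+ 2 / 2 - (1 - (1 - al) * la - (1 - (1 - al) * la)) ^+ 2 / 2) +
    -1 * ((1 - (1 - al) * la - (1 - (1 - al) * la)) ^+ 2 / 2 - (1 - al - (1 - (1 - al) * la)) ^+ 2 / 2) =
    (((1 - al) * la) ^+ 2 + ((1 - al) * la - al) ^+ 2) / 2 by ring.
  apply: divr_gt0 => //.
  have alp : 0 < al by move: lt01; rewrite ltrBlDr ltrDl.
  case: (eqVneq ((1 - al) * la) 0) => [->|zn0].
    by rewrite expr0n add0r sub0r sqrrN exprn_gt0.
  have zp : 0 < (1 - al) * la by rewrite lt_neqAle eq_sym zn0 w0.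
  have := sqr_ge0 ((1 - al) * la - al); have : 0 < ((1 - al) * la) ^+ 2 by exact: exprn_gt0.
  lra.
have s1 : 0 < s + 1 by rewrite addr_gt0.
have s2 : 0 < s + 2 by rewrite addr_gt0.
have eG : 1 * (Gam (1 - (1 - al) * la) 1 - Gam (1 - (1 - al) * la) (1 - (1 - al) * la)) +
   -1 * (Gam (1 - (1 - al) * la) (1 - (1 - al) * la) - Gam (1 - (1 - al) * la) (1 - al)) = gamma2 (1 - al) la.
  by rewrite /Gam /gamma2 /gamma1; field.
rewrite eG.
have eC : 1 * (Psi s (a `^ (s * q)) (b `^ (s * q)) (1 - (1 - al) * la) 1 -
      Psi s (a `^ (s * q)) (b `^ (s * q)) (1 - (1 - al) * la) (1 - (1 - al) * la)) +
   -1 * (Psi s (a `^ (s * q)) (b `^ (s * q)) (1 - (1 - al) * la) (1 - (1 - al) * la) -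
      Psi s (a `^ (s * q)) (b `^ (s * q)) (1 - (1 - al) * la) (1 - al)) =
   c2 (1 - al) la s * b `^ (s * q) + c1 (1 - al) la s * a `^ (s * q).
  rewrite /Psi /c1 /c2 subrr !(@pw0 (s + 1) s1) !(@pw0 (s + 2) s2) !pw1.
  rewrite (_ : 1 - (1 - al) = al); last by ring.
  rewrite (_ : 1 - (1 - (1 - al) * la) = (1 - al) * la); last by ring.
  rewrite (@pw2 (1 - (1 - al) * la)) ?subr_ge0 // (@pw2 ((1 - al) * la)) //.
  move: (b `^ (s * q)) (a `^ (s * q)) (((1 - al) * la) `^ (s + 1)) ((1 - (1 - al) * la) `^ (s + 1)) => B A Z1 Z2.
  move: ((1 - al) `^ (s + 2)) ((1 - al) `^ (s + 1)) (al `^ (s + 2)) (al `^ (s + 1)) => R2 R1 L2 L1.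
  field; by rewrite !gt_eqF.
by rewrite eC.
Qed.

Lemma P2pos (a b q s al la : R) : 0 < a -> a < b -> 1 <= q -> 0 < s -> s * q <= 1 ->
  0 <= al <= 1 -> 0 <= la <= 1 -> 1 - (1 - al) * la <= 1 - al ->
  `|Pf a b s (1 - (1 - al) * la) 1 - Pf a b s (1 - (1 - al) * la) (1 - al)| <= (b - a) * (s + 1) *
    gamma1 (1 - al) la `^ (1 - q^-1) *
    (c4 (1 - al) la s * b `^ (s * q) + c3 (1 - al) la s * a `^ (s * q)) `^ (q^-1).
Proof.
move=> a0 ab q1 s0 sq1 /andP[al0 al1] /andP[la0 la1] h.
have r0 : 0 <= 1 - al by rewrite subr_ge0.
have r1 : 1 - al <= 1 by rewrite lerBlDr lerDl.
apply: le_trans (@piece a b q s (1 - (1 - al) * la) (1 - al) (1 - al) 1 1 1 a0 ab q1 s0 sq1 r0 (lexx _) r1 (lexx 1) _ _ _ _ _) _.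
- by left.
- by left.
- by move=> t /andP[zt tr]; move: (lt_trans zt tr); rewrite ltxx.
- move=> t /andP[zt _]; rewrite mul1r subr_ge0; apply: ltW; exact: le_lt_trans h zt.
- move=> lt01; rewrite /Gam.
  have alp : 0 < al by move: lt01; rewrite ltrBlDr ltrDl.
  have -> : 1 * ((1 - (1 - (1 - al) * la)) ^+ 2 / 2 - (1 - al - (1 - (1 - al) * la)) ^+ 2 / 2) +
    1 * ((1 - al - (1 - (1 - al) * la)) ^+ 2 / 2 - (1 - al - (1 - (1 - al) * la)) ^+ 2 / 2) =
    al * (2 * ((1 - al) * la) - al) / 2 by ring.
  apply: divr_gt0 => //; apply: mulr_gt0 => //.
  lra.
have s1 : 0 < s + 1 by rewrite addr_gt0.
have s2 : 0 < s + 2 by rewrite addr_gt0.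
have eG : 1 * (Gam (1 - (1 - al) * la) 1 - Gam (1 - (1 - al) * la) (1 - al)) +
   1 * (Gam (1 - (1 - al) * la) (1 - al) - Gam (1 - (1 - al) * la) (1 - al)) = gamma1 (1 - al) la.
  by rewrite /Gam /gamma1; field.
rewrite eG.
have eC : 1 * (Psi s (a `^ (s * q)) (b `^ (s * q)) (1 - (1 - al) * la) 1 -
      Psi s (a `^ (s * q)) (b `^ (s * q)) (1 - (1 - al) * la) (1 - al)) +
   1 * (Psi s (a `^ (s * q)) (b `^ (s * q)) (1 - (1 - al) * la) (1 - al) -
      Psi s (a `^ (s * q)) (b `^ (s * q)) (1 - (1 - al) * la) (1 - al)) =
   c4 (1 - al) la s * b `^ (s * q) + c3 (1 - al) la s * a `^ (s * q).
  rewrite /Psi /c3 /c4 subrr !(@pw0 (s + 1) s1) !(@pw0 (s + 2) s2) !pw1.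
  rewrite (_ : 1 - (1 - al) = al); last by ring.
  move: (b `^ (s * q)) (a `^ (s * q)) => B A.
  move: ((1 - al) `^ (s + 2)) ((1 - al) `^ (s + 1)) (al `^ (s + 2)) (al `^ (s + 1)) => R2 R1 L2 L1.
  field; by rewrite !gt_eqF.
by rewrite eC.
Qed.


Lemma Delta_eq (a b s al la : R) : 0 < a -> a < b -> 0 < s ->
  Delta a b al la s = `|(Pf a b s (al * la) (1 - al) - Pf a b s (al * la) 0)
     + (Pf a b s (1 - (1 - al) * la) 1 - Pf a b s (1 - (1 - al) * la) (1 - al))|.
Proof.
move=> a0 ab s0.
have hx0 : xx a b 0 = a by rewrite /xx mulr0 addr0.
have hx1 : xx a b 1 = b by rewrite /xx mulr1 addrC subrK.
have hxm : xx a b (1 - al) = Amean al a b by rewrite /xx /Amean; ring.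
have s1 : 0 < s + 1 by rewrite addr_gt0.
have s2 : 0 < s + 2 by rewrite addr_gt0.
have b0 : 0 < b by apply: lt_trans ab.
have hL : Lmean (s + 1) a b `^ (s + 1) = (b `^ (s + 2) - a `^ (s + 2)) / ((s + 2) * (b - a)).
  rewrite /Lmean (_ : s + 1 + 1 = s + 2); last by ring.
  rewrite -powRrM mulVf ?gt_eqF // powRr1 //.
  apply: divr_ge0; last by rewrite mulr_ge0 // ?subr_ge0 ltW.
  rewrite subr_ge0; apply: ge0_ler_powR; rewrite ?nnegrE ?ltW //.
rewrite /Delta hL /Pf hx0 hx1 hxm.
congr (`|_|).
rewrite /Amean.
move: (b `^ (s + 2)) (a `^ (s + 2)) (b `^ (s + 1)) (a `^ (s + 1)) => B2 A2 B1 A1.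
move: ((al * a + (1 - al) * b) `^ (s + 2)) ((al * a + (1 - al) * b) `^ (s + 1)) => M2 M1.
move: ((s + 2) * (b - a)) => D.
ring.
Qed.

End S.

Local Close Scope classical_set_scope.

Theorem mainTheorem7 (R : realType) (a b q s alpha lambda : R) :
  0 < a -> a < b -> 1 <= q -> 0 < s -> s < q^-1 ->
  0 <= alpha <= 1 -> 0 <= lambda <= 1 ->
  (alpha * lambda <= 1 - alpha -> 1 - alpha <= 1 - lambda * (1 - alpha) ->
    Delta a b alpha lambda s <=
    (b - a) * (s + 1) *
    (gamma2 alpha lambda `^ (1 - q^-1) *
       (c1 alpha lambda s * b `^ (s * q) + c2 alpha lambda s * a `^ (s * q)) `^ (q^-1)
     + gamma2 (1 - alpha) lambda `^ (1 - q^-1) *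
       (c2 (1 - alpha) lambda s * b `^ (s * q) + c1 (1 - alpha) lambda s * a `^ (s * q)) `^ (q^-1)))
  /\
  (alpha * lambda <= 1 - lambda * (1 - alpha) -> 1 - lambda * (1 - alpha) <= 1 - alpha ->
    Delta a b alpha lambda s <=
    (b - a) * (s + 1) *
    (gamma2 alpha lambda `^ (1 - q^-1) *
       (c1 alpha lambda s * b `^ (s * q) + c2 alpha lambda s * a `^ (s * q)) `^ (q^-1)
     + gamma1 (1 - alpha) lambda `^ (1 - q^-1) *
       (c4 (1 - alpha) lambda s * b `^ (s * q) + c3 (1 - alpha) lambda s * a `^ (s * q)) `^ (q^-1)))
  /\
  (1 - alpha <= alpha * lambda -> alpha * lambda <= 1 - lambda * (1 - alpha) ->
    Delta a b alpha lambda s <=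
    (b - a) * (s + 1) *
    (gamma1 alpha lambda `^ (1 - q^-1) *
       (c3 alpha lambda s * b `^ (s * q) + c4 alpha lambda s * a `^ (s * q)) `^ (q^-1)
     + gamma2 (1 - alpha) lambda `^ (1 - q^-1) *
       (c2 (1 - alpha) lambda s * b `^ (s * q) + c1 (1 - alpha) lambda s * a `^ (s * q)) `^ (q^-1))).
Proof.
move=> a0 ab q1 s0 sq al01 la01.
have q0 : 0 < q by apply: lt_le_trans q1.
have sq1 : s * q <= 1.
  by apply: ltW; rewrite -(mulVf (lt0r_neq0 q0)) ltr_pM2r.
have ez : forall al la : R, 1 - la * (1 - al) = 1 - (1 - al) * la by move=> ? ?; rewrite mulrC.
rewrite !ez (@Delta_eq R a b s alpha lambda a0 ab s0).
split; [|split] => h1 h2.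
- apply: le_trans (ler_normD _ _) _; rewrite mulrDr !mulrA.
  apply: lerD; [exact: P1int | exact: P2int].
- apply: le_trans (ler_normD _ _) _; rewrite mulrDr !mulrA.
  apply: lerD; [| exact: P2pos].
  apply: P1int => //; exact: le_trans h1 h2.
- apply: le_trans (ler_normD _ _) _; rewrite mulrDr !mulrA.
  apply: lerD; [exact: P1neg | apply: P2int => //; exact: le_trans h1 h2].
Qed.
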